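(* Let $f\colon X\to X$ be a homeomorphism of a metric space $X$ and let $k\in\mathbb{Z}$. Every Borel probability measure that is inner-distal with respect to $f$ is also inner-distal with respect to $f^k$. In particular, if $f$ is inner-distal, then $f^k$ is inner-distal.
   Context: For a homeomorphism $g$ of $(X,d)$, $\mathcal{P}_g(x)=\{y\colon \inf_{n\in\mathbb{Z}} d(g^n(x),g^n(y))=0\}$. $g$ is inner-distal if $\operatorname{Int}\mathcal{P}_g(x)=\emptyset$ for all $x$; a Borel probability measure $\mu$ is inner-distal w.r.t. $g$ if $\mu(\operatorname{Int}\mathcal{P}_g(x))=0$ for all $x$. *)

(* Defs.v *)
From HB Require Import structures.
From mathcomp Require Import all_boot all_order all_algebra.
From mathcomp Require Import all_classical all_reals all_analysis.

Set Implicit Arguments.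
Unset Strict Implicit.
Unset Printing Implicit Defensive.

Import Order.TTheory GRing.Theory Num.Theory.
Local Open Scope classical_set_scope.
Local Open Scope ring_scope.

(* metric spaces equipped with a distinguished point (needed because
   MathComp-Analysis measurable types are pointed) *)
#[short(type="pointedMetricType")]
HB.structure Definition PointedMetric (K : numDomainType) :=
  { M of Pointed M & Metric K M }.

Definition borel (R : realType) (X : pointedMetricType R) :=
  g_sigma_algebraType (@open X).

Section InnerDistal.
Context {R : realType} {X : metricType R}.

Definition homeomorphism (g ginv : X -> X) : Prop :=
  [/\ continuous g, continuous ginv, cancel g ginv & cancel ginv g].

Definition zpow (g ginv : X -> X) (n : int) : X -> X :=
  match n with
  | Posz m => iter m g
  | Negz m => iter m.+1 ginv
  end.

Definition proximal_cell (g ginv : X -> X) (x : X) : set X :=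
  [set y | inf [set mdist (zpow g ginv n x) (zpow g ginv n y) | n in [set: int]] = 0].

Definition inner_distal (g ginv : X -> X) : Prop :=
  forall x : X, interior (proximal_cell g ginv x) = set0.

Definition inner_distal_measure (g ginv : X -> X) (mu : set X -> \bar R) : Prop :=
  forall x : X, mu (interior (proximal_cell g ginv x)) = 0%E.

End InnerDistal.

(* Main.v *)
Require Import Defs.
From HB Require Import structures.
From mathcomp Require Import all_boot all_order all_algebra.
From mathcomp Require Import all_classical all_reals all_analysis.

Import Order.TTheory GRing.Theory Num.Theory.
Local Open Scope classical_set_scope.
Local Open Scope ring_scope.

Section Aux.
Context {R : realType} {X : metricType R}.
Variables (f finv : X -> X).
Hypothesis fK : cancel f finv.
Hypothesis Kf : cancel finv f.

Lemma zpowN (k : int) x : zpow finv f k x = zpow f finv (- k) x.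
Proof. by case: k => [[|m]|m]. Qed.

Lemma zpowS (n : int) x : zpow f finv (n + 1) x = f (zpow f finv n x).
Proof.
case: n => [m|[|m]] /=; [by rewrite addn1 | by rewrite Kf | by rewrite subn1 /= Kf].
Qed.

Lemma zpowP (n : int) x : zpow f finv (n - 1) x = finv (zpow f finv n x).
Proof.
by rewrite -{2}(subrK 1 n) zpowS fK.
Qed.

Lemma zpowD (a b : int) x : zpow f finv (a + b) x = zpow f finv a (zpow f finv b x).
Proof.
elim/int_rect: a => [|n IH|n IH]; first by rewrite add0r.
- by rewrite -addn1 PoszD addrAC zpowS IH -zpowS.
- rewrite -addn1 PoszD opprD addrAC zpowP IH -zpowP; congr zpow.
Qed.

Lemma zpow_iter (k : int) (m : nat) x :
  iter m (zpow f finv k) x = zpow f finv (k * m%:Z) x.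
Proof.
elim: m => [|m IH]; first by rewrite mulr0.
by rewrite iterS IH -zpowD -addn1 PoszD mulrDr mulr1 addrC.
Qed.

Lemma zpow_zpow (k n : int) x :
  zpow (zpow f finv k) (zpow finv f k) n x = zpow f finv (k * n) x.
Proof.
case: n => m; first exact: zpow_iter.
transitivity (iter m.+1 (zpow finv f k) x) => //.
have -> : iter m.+1 (zpow finv f k) x = iter m.+1 (zpow f finv (- k)) x.
  by apply: eq_iter => y; rewrite zpowN.
by rewrite zpow_iter NegzE mulrN mulNr.
Qed.

Lemma inf0_sub (A B : set R) : A `<=` B -> nonempty A -> lbound B 0 ->
  inf A = 0 -> inf B = 0.
Proof.
move=> sub neA lbB HA.
have neB : nonempty B by case: neA => e /sub He; exists e.
apply/eqP; rewrite eq_le; apply/andP; split; last exact: lb_le_inf.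
rewrite -HA; apply: lb_le_inf => // e /sub He.
by apply: ge_inf => //; exists 0.
Qed.

Lemma proximal_sub (k : int) x :
  proximal_cell (zpow f finv k) (zpow finv f k) x `<=` proximal_cell f finv x.
Proof.
move=> y; rewrite /proximal_cell; apply: inf0_sub.
- move=> e [n _ <-]; exists (k * n) => //; by rewrite !zpow_zpow.
- exists (mdist (zpow (zpow f finv k) (zpow finv f k) 0 x)
                   (zpow (zpow f finv k) (zpow finv f k) 0 y)); by exists 0.
- move=> e [n _ <-]; exact: mdist_ge0.
Qed.

End Aux.

Theorem lemma3p4 (R : realType) (X : pointedMetricType R) (f finv : X -> X) (k : int) :
  homeomorphism f finv ->
  (forall mu : probability (borel X) R,
      inner_distal_measure f finv mu ->
      inner_distal_measure (zpow f finv k) (zpow finv f k) mu) /\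
  (inner_distal f finv -> inner_distal (zpow f finv k) (zpow finv f k)).
Proof.
move=> [_ _ fK Kf].
have sub x : interior (proximal_cell (zpow f finv k) (zpow finv f k) x)
    `<=` interior (proximal_cell f finv x).
  by apply: interiorS; exact: proximal_sub.
split.
- move=> mu H x; apply/eqP; rewrite eq_le measure_ge0 andbT -(H x).
  have mo (A : set X) : open A -> measurable (A : set (borel X)).
    by move=> oA; apply: sub_sigma_algebra.
  apply: (le_measure mu); rewrite ?inE.
  1,2: apply: mo; exact: open_interior.
  exact: sub.
- move=> H x; apply/seteqP; split => // y /sub; by rewrite H.
Qed.
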